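(* Let $n\ge 1$ and let $x_1,\dots,x_n$ be distinct integers, each greater than $1$, and let $D=\{1,0,x_1,\dots,x_n\}$. Then $diam(D)=3$ if $n=1$ and $diam(D)=4$ if $n>1$.
   Context: A signed tree is a pair $(T,s)$ where $T$ is a finite tree and $s:E(T)\to\{+,-\}$. The signed degree $sdeg(v)$ of a vertex is the number of incident positive edges minus the number of incident negative edges. $(T,s)$ realizes (satisfies) a set $D$ of integers if $D=\{sdeg(v):v\in V(T)\}$. For a set $D$ containing $1$ or $-1$, $diam(D)=\min\{diam(T): \text{some signed tree }(T,s)\text{ realizes }D\}$, where $diam(T)$ is the diameter of the tree $T$. *)

(* Defs.v *)
From mathcomp Require Import all_boot all_order all_algebra.
Set Implicit Arguments. Unset Strict Implicit. Unset Printing Implicit Defensive.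
Import Order.TTheory GRing.Theory Num.Theory.

Definition simple_graph (T : finType) (e : rel T) : Prop :=
  (forall x y, e x y = e y x) /\ (forall x, ~~ e x x).

Definition is_tree (T : finType) (e : rel T) : Prop :=
  [/\ simple_graph e, 0 < #|T|,
      (forall x y, connect e x y) &
      (forall c : seq T, uniq c -> 2 < size c -> ~~ cycle e c)].

(* A signing s : true = positive edge, false = negative edge;
   the sign of an edge does not depend on its orientation. *)
Definition signed_tree (T : finType) (e : rel T) (s : T -> T -> bool) : Prop :=
  is_tree e /\ (forall x y, e x y -> s x y = s y x).

Definition sdeg (T : finType) (e : rel T) (s : T -> T -> bool) (v : T) : int :=
  (#|[set u | e v u && s v u]|%:Z - #|[set u | e v u && ~~ s v u]|%:Z)%R.

Definition realizes (T : finType) (e : rel T) (s : T -> T -> bool)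
  (D : seq int) : Prop :=
  forall z : int, z \in D <-> exists v : T, sdeg e s v = z.

Definition walk_len (T : finType) (e : rel T) (x y : T) (n : nat) : Prop :=
  exists p : seq T, [/\ path e x p, last x p = y & size p = n].

Definition dist_is (T : finType) (e : rel T) (x y : T) (d : nat) : Prop :=
  walk_len e x y d /\ (forall m, walk_len e x y m -> d <= m).

Definition diam_is (T : finType) (e : rel T) (k : nat) : Prop :=
  (exists x y, dist_is e x y k) /\ (forall x y d, dist_is e x y d -> d <= k).

Definition diamD_is (D : seq int) (k : nat) : Prop :=
  (exists (T : finType) (e : rel T) (s : T -> T -> bool),
      [/\ signed_tree e s, realizes e s D & diam_is e k]) /\
  (forall (T : finType) (e : rel T) (s : T -> T -> bool) (d : nat),
      signed_tree e s -> realizes e s D -> diam_is e d -> k <= d).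

(* Main.v *)
Require Import Defs.
From mathcomp Require Import all_boot all_order all_algebra.
Import Order.TTheory GRing.Theory Num.Theory.
From mathcomp Require Import zify.
Set Implicit Arguments. Unset Strict Implicit. Unset Printing Implicit Defensive.

Lemma split_first (T : eqType) (a : pred T) (q : seq T) :
  has a q -> exists q1 z q2, [/\ q = q1 ++ z :: q2, a z & ~~ has a q1].
Proof.
elim: q => //= y q IH; case: (boolP (a y)) => ay /=.
  by move=> _; exists [::], y, q.
move/IH => [q1 [z [q2 [-> az nh]]]]; exists (y :: q1), z, q2; split => //=.
by rewrite negb_or ay.
Qed.

Section TreeTheory.
Variable T : finType.
Variable e : rel T.
Hypothesis esym : forall x y, e x y = e y x.
Hypothesis eirr : forall x, ~~ e x x.
Hypothesis acyc : forall c : seq T, uniq c -> 2 < size c -> ~~ cycle e c.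

Lemma path_rev x p : path e x p -> path e (last x p) (rev (belast x p)).
Proof.
move=> h; rewrite rev_path; apply: etrans h; apply: eq_path => a b; exact: esym.
Qed.

Lemma fork x a p b q : a != b -> path e x (a :: p) -> path e x (b :: q) ->
  uniq (x :: a :: p) -> uniq (x :: b :: q) -> last x (a :: p) = last x (b :: q) -> False.
Proof.
move=> ab pP pQ uP uQ hl; set P := a :: p in pP uP hl *; set Q := b :: q in pQ uQ hl *.
have hasq : has (mem P) Q.
  apply/hasP; exists (last x Q); first by rewrite /Q /= mem_last.
  by rewrite -hl /P /= mem_last.
have [q1 [z [q2 [defQ zP nh]]]] := split_first hasq.
have hasp : has (pred1 z) P by apply/hasP; exists z => //=.
have [p1 [z' [p2 [defP /eqP zz nh2]]]] := split_first hasp.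
subst z'.
set C := x :: (p1 ++ z :: rev q1).
suff [c1 [u1 s1]] : [/\ cycle e C, uniq C & 2 < size C] by move: (acyc u1 s1); rewrite c1.
split.
- rewrite /= rcons_cat /= cat_path /=.
  move: pP pQ; rewrite -/P -/Q defP defQ !cat_path /= => /andP[-> /andP[-> _]].
  move=> /andP[pq1 /andP[eq1 _]] /=.
  have := @path_rev x (rcons q1 z); rewrite last_rcons belast_rcons rev_cons.
  by apply; rewrite rcons_path pq1.
- move: uP uQ; rewrite -/P -/Q defP defQ.
  rewrite !cons_uniq => /andP[xP uP'] /andP[xQ uQ'].
  have xq1 : x \notin q1 by apply: contra xQ; rewrite mem_cat => ->.
  have uq1 : uniq q1 by move: uQ'; rewrite cat_uniq => /andP[].
  have q1P : {in q1, forall v, v \notin P} by apply/hasPn.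
  have zq1 : z \notin q1 by apply/negP => /q1P; rewrite (zP : z \in P).
  have [up1 hp1 _] : [/\ uniq p1, ~~ has (mem p1) (z :: p2) & uniq (z :: p2)].
    by move: uP'; rewrite cat_uniq => /and3P[].
  move: xP; rewrite mem_cat inE !negb_or => /andP[xp1 /andP[xz _]].
  rewrite mem_cat inE mem_rev !negb_or xp1 xz xq1 /=.
  rewrite cat_uniq up1 /= mem_rev zq1 rev_uniq uq1 !andbT.
  apply/negP => /orP[zp1|].
    by move: hp1 => /=; rewrite zp1.
  move=> /hasP[v]; rewrite mem_rev => /q1P vP vp1.
  by move: vP; rewrite defP mem_cat vp1.
- rewrite /C /= size_cat /= size_rev; clear C.
  clear nh2; case: p1 defP => [|? ?] defP; last by rewrite /= !addnS.
  case: q1 defQ nh => [|? ?] defQ nh; last by rewrite /= !addnS.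
  by move: defP defQ; rewrite /P /Q /= => -[ea _] [eb _]; rewrite ea eb eqxx in ab.
Qed.

Lemma upath_unique x p q : path e x p -> path e x q -> uniq (x :: p) -> uniq (x :: q) ->
  last x p = last x q -> p = q.
Proof.
elim: p x q => [|a p IH] x [|b q] //=.
- move=> _ _ _ /andP[xq _] hl; exfalso; move: xq; rewrite hl.
  by have := mem_last b q; rewrite in_cons => ->.
- move=> _ _ /andP[xp _] _ hl; exfalso; move: xp; rewrite -hl.
  by have := mem_last a p; rewrite in_cons => ->.
- move=> pp pq up uq hl; case: (eqVneq a b) => [ab|ab].
  + subst b; congr (_ :: _); apply: (IH a).
    * by case/andP: pp.
    * by case/andP: pq.
    * by move: up; rewrite cons_uniq => /andP[].
    * by move: uq; rewrite cons_uniq => /andP[].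
    * exact: hl.
  + by case: (fork ab pp pq up uq hl).
Qed.

Lemma shorten_ex x p : path e x p -> exists p',
  [/\ path e x p', uniq (x :: p'), last x p' = last x p & size p' <= size p].
Proof.
move=> hp; case: (shortenP hp) => p' pp up sub.
exists p'; split => //; apply: uniq_leq_size => //.
by move: up; rewrite cons_uniq => /andP[].
Qed.

Lemma walk_lb x p m : path e x p -> uniq (x :: p) -> walk_len e x (last x p) m -> size p <= m.
Proof.
move=> pp up [q [pq lq <-]].
have [q' [pq' uq' lq' sq']] := shorten_ex pq.
suff -> : p = q' by [].
by apply: (upath_unique pp pq' up uq'); rewrite lq' lq.
Qed.

Lemma dist_tree x p : path e x p -> uniq (x :: p) -> dist_is e x (last x p) (size p).
Proof.
move=> pp up; split; first by exists p.
by move=> m; apply: walk_lb.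
Qed.

Lemma ext_end x p0 y c : path e x (rcons p0 y) -> uniq (x :: rcons p0 y) -> e y c ->
  c != last x p0 -> uniq (x :: rcons (rcons p0 y) c).
Proof.
move=> pp up eyc cl.
rewrite -rcons_cons rcons_uniq up andbT.
apply/negP => cin.
have cy : c != y by apply/negP => /eqP cy; subst c; move: (eirr y); rewrite eyc.
have cin' : c \in x :: p0.
  by move: cin; rewrite -rcons_cons mem_rcons inE (negbTE cy).
have hp : has (pred1 c) (x :: p0) by apply/hasP; exists c => //=.
have [s1 [c' [s2 [def /eqP cc _]]]] := split_first hp.
subst c'.
have defL : x :: rcons p0 y = s1 ++ c :: rcons s2 y by rewrite -rcons_cons def rcons_cat.
have := acyc (c := c :: rcons s2 y); rewrite /= rcons_path last_rcons eyc andbT.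
have -> : path e c (rcons s2 y).
  have : sorted e (x :: rcons p0 y) by [].
  by rewrite defL => /cat_sorted2 [_].
have -> : (c \notin rcons s2 y) && uniq (rcons s2 y).
  by move: up; rewrite defL cat_uniq -cons_uniq => /and3P[].
move=> H; suff: 2 < (size (rcons s2 y)).+1 by move/(H isT).
rewrite size_rcons.
clear H; case: s2 def {defL} => // def.
move: cl; rewrite -(last_cons x x p0) def last_cat /=.
by rewrite eqxx.
Qed.

Lemma last_rev (x : T) s : last x (rev s) = head x s.
Proof. by case: s => //= y s; rewrite rev_cons last_rcons. Qed.

Lemma rev_upath x p : path e x p -> uniq (x :: p) ->
  [/\ path e (last x p) (rev (belast x p)), uniq (last x p :: rev (belast x p))
    & last (last x p) (rev (belast x p)) = x].
Proof.
move=> pp up; split.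
- exact: path_rev.
- by rewrite -rev_rcons -lastI rev_uniq.
- by rewrite last_rev; case: p {pp up}.
Qed.

Definition internal v := exists a b, [/\ e v a, e v b & a != b].

Lemma internal_avoid v z : internal v -> exists a, e v a /\ a != z.
Proof.
move=> [a [b [va vb ab]]]; case: (eqVneq a z) => [az|az]; last by exists a.
by subst z; exists b; rewrite eq_sym.
Qed.

Lemma long_path u p : path e u p -> uniq (u :: p) -> p != [::] -> internal u ->
  internal (last u p) -> exists a q, [/\ path e a q, uniq (a :: q) & size q = (size p).+2].
Proof.
case/lastP: p => [|p0 w] // pp up _ iu; rewrite last_rcons => iw.
have [b [wb bl]] := internal_avoid (last u p0) iw.
have up2 := ext_end pp up wb bl.
have pp2 : path e u (rcons (rcons p0 w) b) by rewrite rcons_path pp last_rcons.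
have [pr ur lr] := rev_upath pp2 up2.
move: pr ur lr; rewrite last_rcons belast_rcons rev_cons => pr ur lr.
have [a [ua al]] := internal_avoid (head b (rcons p0 w)) iu.
have al' : a != last b (rev (rcons p0 w)) by rewrite last_rev.
exists b, (rcons (rcons (rev (rcons p0 w)) u) a); split.
- by rewrite rcons_path pr last_rcons.
- exact: ext_end pr ur ua al'.
- by rewrite !size_rcons size_rev size_rcons.
Qed.

Lemma no_triangle a b c : e a b -> e b c -> e c a -> a != b -> b != c -> a != c -> False.
Proof.
move=> ab bc ca nab nbc nac.
have := acyc (c := [:: a; b; c]); rewrite /= ab bc ca !inE negb_or nab nac nbc.
by move/(_ isT isT).
Qed.

Hypothesis conn : forall x y, connect e x y.

Lemma upath_ex x y : exists p, [/\ path e x p, uniq (x :: p) & last x p = y].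
Proof.
have /connectP [p pp ->] := conn x y.
have [p' [pp' up' lp' _]] := shorten_ex pp.
by exists p'.
Qed.

Lemma lb_pair a b d : a != b -> internal a -> internal b ->
  (forall x y k, dist_is e x y k -> k <= d) -> 3 <= d /\ (~~ e a b -> 4 <= d).
Proof.
move=> nab ia ib hd.
have [p [pp up lp]] := upath_ex a b.
have pn : p != [::] by apply/eqP => p0; subst p; rewrite /= in lp; subst b; rewrite eqxx in nab.
have ib' : internal (last a p) by rewrite lp.
have [x [q [pq uq sq]]] := long_path pp up pn ia ib'.
have := hd _ _ _ (dist_tree pq uq); rewrite sq => hs.
split.
- by apply: leq_trans hs; clear ib'; case: p pp up lp pn sq.
- move=> nab'; apply: leq_trans hs.
  clear ib'; case: p pp up lp pn sq => [|c [|c' p']] //= /andP[ac _] _ lp _ _.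
  by subst c; rewrite ac in nab'.
Qed.

Lemma lb3 u w d : u != w -> internal u -> internal w ->
  (forall x y k, dist_is e x y k -> k <= d) -> 3 <= d.
Proof. by move=> nuw iu iw hd; case: (lb_pair nuw iu iw hd). Qed.

Lemma lb4 u v w d : u != v -> v != w -> u != w -> internal u -> internal v -> internal w ->
  (forall x y k, dist_is e x y k -> k <= d) -> 4 <= d.
Proof.
move=> nuv nvw nuw iu iv iw hd.
case: (boolP (e u v)) => euv; last by case: (lb_pair nuv iu iv hd) => _; apply.
case: (boolP (e v w)) => evw; last by case: (lb_pair nvw iv iw hd) => _; apply.
case: (boolP (e u w)) => euw; last by case: (lb_pair nuw iu iw hd) => _; apply.
have ewu : e w u by rewrite esym.
by case: (no_triangle euv evw ewu nuv nvw nuw).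
Qed.

End TreeTheory.

Lemma walk_cat (T : finType) (e : rel T) x y z a b :
  walk_len e x y a -> walk_len e y z b -> walk_len e x z (a + b).
Proof.
move=> [p [pp lp sp]] [q [pq lq sq]]; exists (p ++ q); split.
- by rewrite cat_path pp lp.
- by rewrite last_cat lp.
- by rewrite size_cat sp sq.
Qed.

Lemma walk_rev (T : finType) (e : rel T) x y a : (forall u v, e u v = e v u) ->
  walk_len e x y a -> walk_len e y x a.
Proof.
move=> es [p [pp lp sp]]; exists (rev (belast x p)); split.
- rewrite -lp rev_path; apply: etrans pp; apply: eq_path => u v; exact: es.
- by case: p pp lp sp => [|c p] /= _ <- //; rewrite rev_cons last_rcons.
- by rewrite size_rev size_belast.
Qed.

Lemma walk1 (T : finType) (e : rel T) x y : e x y -> walk_len e x y 1.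
Proof. by move=> h; exists [:: y]; rewrite /= h. Qed.

Lemma dist_le (T : finType) (e : rel T) x y d m : dist_is e x y d -> walk_len e x y m -> d <= m.
Proof. by move=> [_ h] /h. Qed.

Section Rooted.
Variable T : finType.
Variable par : T -> option T.
Variable depth : T -> nat.
Variable root : T.
Hypothesis Hpar : forall x y, par x = Some y -> depth x = (depth y).+1.
Hypothesis Hroot : forall x, par x = None -> x = root.
Hypothesis Hr0 : depth root = 0.

Definition redge : rel T := fun x y => (par x == Some y) || (par y == Some x).

Lemma redge_sym x y : redge x y = redge y x.
Proof. by rewrite /redge orbC. Qed.

Lemma redge_irr x : ~~ redge x x.
Proof.
rewrite /redge orbb; apply/negP => /eqP /Hpar h.
by move: (n_Sn (depth x)).
Qed.

Lemma walk_root_k k x : depth x = k -> walk_len redge x root k.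
Proof.
elim: k x => [|k IH] x hx.
  case hp: (par x) => [y|]; first by move: (Hpar hp); rewrite hx.
  by rewrite (Hroot hp); exists [::].
case hp: (par x) => [y|]; last by move: hx; rewrite (Hroot hp) Hr0.
have hy : depth y = k by move: (Hpar hp); rewrite hx => -[].
have exy : redge x y by rewrite /redge hp eqxx.
by have := walk_cat (walk1 exy) (IH y hy); rewrite add1n.
Qed.

Lemma walk_root x : walk_len redge x root (depth x).
Proof. exact: walk_root_k. Qed.

Lemma redge_conn x y : connect redge x y.
Proof.
have := walk_cat (walk_root x) (walk_rev redge_sym (walk_root y)).
by move=> [p [pp lp _]]; apply/connectP; exists p.
Qed.

Lemma max_depth (c : seq T) v0 : v0 \in c -> exists2 v, v \in c & forall w, w \in c -> depth w <= depth v.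
Proof.
elim: c v0 => // a c IH v0 _.
case: c IH => [|b c] IH.
  by exists a => [|w]; rewrite ?inE // => /eqP ->.
have [v vc hv] := IH b (mem_head _ _).
case: (leqP (depth a) (depth v)) => ha.
  exists v; first by rewrite inE vc orbT.
  by move=> w; rewrite inE => /orP[/eqP ->|/hv].
exists a; first exact: mem_head.
move=> w; rewrite inE => /orP[/eqP ->//|/hv h]; exact: (leq_trans h (ltnW ha)).
Qed.

Lemma redge_acyc (c : seq T) : uniq c -> 2 < size c -> ~~ cycle redge c.
Proof.
move=> uc sc; apply/negP => cc.
have [v0 c0] : exists v0, v0 \in c by case: c uc sc cc => // a c _ _ _; exists a; exact: mem_head.
have [v vc hv] := max_depth c0.
case: (rot_to vc) => i s' hr.
have : cycle redge (v :: s') by rewrite -hr rot_cycle.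
have : uniq (v :: s') by rewrite -hr rot_uniq.
have : 2 < size (v :: s') by rewrite -hr size_rot.
have hin : forall w, w \in s' -> w \in c by move=> w ws; rewrite -(mem_rot i) hr inE ws orbT.
case: s' hr hin => [|a [|d s'']] // hr hin _.
move=> uq /= /andP[va /andP[_]]; rewrite rcons_path => /andP[_ bv].
set b := last d s'' in bv.
have ha : depth a <= depth v by apply: hv; apply: hin; exact: mem_head.
have hb : depth b <= depth v by apply: hv; apply: hin; rewrite inE mem_last orbT.
have pa : par v = Some a.
  move: va; rewrite /redge => /orP[/eqP //|/eqP /Hpar h].
  by move: ha; rewrite h ltnn.
have pb : par v = Some b.
  move: bv; rewrite /redge => /orP[/eqP /Hpar h|/eqP //].
  by move: hb; rewrite h ltnn.
move: uq; rewrite pa in pb; case: pb => ab.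
rewrite cons_uniq => /andP[_]; by rewrite cons_uniq ab /b mem_last.
Qed.

Lemma redge_tree : is_tree redge.
Proof.
split.
- by split; [exact: redge_sym | exact: redge_irr].
- by apply/card_gt0P; exists root.
- exact: redge_conn.
- exact: redge_acyc.
Qed.

End Rooted.

Lemma eqS (T : eqType) (a b : T) : (Some a == Some b) = (a == b). Proof. by []. Qed.
Lemma eqSN (T : eqType) (a : T) : (Some a == None) = false. Proof. by []. Qed.
Lemma eqNS (T : eqType) (a : T) : (None == Some a) = false. Proof. by []. Qed.
Lemma eqL (T U : eqType) (a b : T) : (@inl T U a == inl b) = (a == b). Proof. by []. Qed.
Lemma eqR (T U : eqType) (a b : U) : (@inr T U a == inr b) = (a == b). Proof. by []. Qed.
Lemma eqLR (T U : eqType) (a : T) (b : U) : (inl a == inr b) = false. Proof. by []. Qed.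
Lemma eqRL (T U : eqType) (a : T) (b : U) : (inr b == inl a) = false. Proof. by []. Qed.
Definition eqsimp := (eqS, eqSN, eqNS, eqL, eqR, eqLR, eqRL, eqxx).

Section Constr.
Variable n : nat.
Variable m : 'I_n -> nat.
Definition V := option ('I_n + ('I_n + {i : 'I_n & 'I_(m i)}))%type.
Definition vpar (v : V) : option V :=
  match v with
  | None => None
  | Some (inl _) => Some None
  | Some (inr (inl _)) => Some None
  | Some (inr (inr k)) => Some (Some (inl (tag k)))
  end.
Definition vdepth (v : V) : nat :=
  match v with
  | None => 0
  | Some (inl _) => 1
  | Some (inr (inl _)) => 1
  | Some (inr (inr _)) => 2
  end.
Lemma vpar_depth x y : vpar x = Some y -> vdepth x = (vdepth y).+1.
Proof. by case: x => [[i|[j|[i k]]]|] //= [<-]. Qed.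
Lemma vpar_root x : vpar x = None -> x = None.
Proof. by case: x => [[i|[j|[i k]]]|]. Qed.
Definition ve : rel V := redge vpar.
Definition isw (v : V) := if v is Some (inl _) then true else false.
Definition vs (a b : V) : bool := ~~ (((a == None) && isw b) || ((b == None) && isw a)).

Definition wv i : V := Some (inl i).
Definition cl j : V := Some (inr (inl j)).
Definition wl i (k : 'I_(m i)) : V := Some (inr (inr (existT (fun j => 'I_(m j)) i k))).

Lemma pos_c : [set u | ve None u && vs None u] = [set cl j | j : 'I_n].
Proof.
apply/setP => u; apply/idP/idP.
- rewrite inE; case: u => [[i|[j|[i k]]]|] //=; rewrite /ve /redge /vs /= ?eqsimp //=.
  by move=> _; apply/imsetP; exists j.
- by case/imsetP => j _ ->; rewrite inE /ve /redge /vs /= ?eqsimp.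
Qed.
Lemma neg_c : [set u | ve None u && ~~ vs None u] = [set wv i | i : 'I_n].
Proof.
apply/setP => u; apply/idP/idP.
- rewrite inE; case: u => [[i|[j|[i k]]]|] //=; rewrite /ve /redge /vs /= ?eqsimp //=.
  by move=> _; apply/imsetP; exists i.
- by case/imsetP => j _ ->; rewrite inE /ve /redge /vs /= ?eqsimp.
Qed.

Lemma pos_w i : [set u | ve (wv i) u && vs (wv i) u] = [set wl k | k : 'I_(m i)].
Proof.
apply/setP => u; apply/idP/idP.
- rewrite inE; case: u => [[i'|[j|[i' k]]]|] //=; rewrite /ve /redge /vs /= ?eqsimp //=.
  by rewrite andbT => /eqP ?; subst i'; apply/imsetP; exists k.
- by case/imsetP => k _ ->; rewrite inE /ve /redge /vs /= ?eqsimp.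
Qed.

Lemma neg_w i : [set u | ve (wv i) u && ~~ vs (wv i) u] = [set None].
Proof.
apply/setP => u; rewrite !inE.
by case: u => [[i'|[j|[i' k]]]|] //=; rewrite /ve /redge /vs /= ?eqsimp ?andbF.
Qed.

Lemma pos_cl j : [set u | ve (cl j) u && vs (cl j) u] = [set None].
Proof.
apply/setP => u; rewrite !inE.
by case: u => [[i'|[j'|[i' k]]]|] //=; rewrite /ve /redge /vs /= ?eqsimp.
Qed.

Lemma neg_cl j : [set u | ve (cl j) u && ~~ vs (cl j) u] = set0.
Proof.
apply/setP => u; rewrite !inE.
by case: u => [[i'|[j'|[i' k]]]|] //=; rewrite /ve /redge /vs /= ?eqsimp.
Qed.

Lemma pos_wl i k : [set u | ve (@wl i k) u && vs (@wl i k) u] = [set wv i].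
Proof.
apply/setP => u; rewrite !inE.
by case: u => [[i'|[j'|[i' k']]]|] //=; rewrite /ve /redge /vs /= ?eqsimp ?andbT ?orbF 1?eq_sym.
Qed.

Lemma neg_wl i k : [set u | ve (@wl i k) u && ~~ vs (@wl i k) u] = set0.
Proof.
apply/setP => u; rewrite !inE.
by case: u => [[i'|[j'|[i' k']]]|] //=; rewrite /ve /redge /vs /= ?eqsimp ?andbF.
Qed.

Lemma wl_inj i : injective (@wl i).
Proof.
move=> a b [] H.
by have := congr1 (tagged_as (existT (fun j => 'I_(m j)) i a)) H; rewrite !tagged_asE.
Qed.

Local Open Scope ring_scope.
Lemma sdeg_c : sdeg ve vs None = 0.
Proof.
rewrite /sdeg pos_c neg_c !card_imset; try by move=> a b [].
by rewrite card_ord subrr.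
Qed.

Lemma sdeg_w i : sdeg ve vs (wv i) = (m i)%:Z - 1.
Proof. by rewrite /sdeg pos_w neg_w card_imset ?card_ord ?cards1 //; apply: wl_inj. Qed.

Lemma sdeg_cl j : sdeg ve vs (cl j) = 1.
Proof. by rewrite /sdeg pos_cl neg_cl cards1 cards0 subr0. Qed.

Lemma sdeg_wl i k : sdeg ve vs (@wl i k) = 1.
Proof. by rewrite /sdeg pos_wl neg_wl cards1 cards0 subr0. Qed.
Local Close Scope ring_scope.

Lemma v_signed : signed_tree ve vs.
Proof.
split; last by move=> a b _; rewrite /vs orbC.
apply: (@redge_tree _ vpar vdepth None) => //.
- exact: vpar_depth.
- exact: vpar_root.
Qed.

Lemma vwalk a : walk_len ve a None (vdepth a).
Proof. by apply: walk_root => //; [exact: vpar_depth | exact: vpar_root]. Qed.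

Lemma vdepth_le a : vdepth a <= 2.
Proof. by case: a => [[i|[j|[i k]]]|]. Qed.

End Constr.

Lemma internal_pos (T : finType) (e : rel T) s v (z : int) :
  sdeg e s v = z -> (1 < z)%R -> internal e v.
Proof.
rewrite /sdeg => hz hz1.
have : 1 < #|[set u | e v u && s v u]| by lia.
move/card_gt1P => [a [b [ha hb ab]]]; exists a, b.
by move: ha hb; rewrite !inE => /andP[-> _] /andP[-> _].
Qed.

Lemma internal_zero (T : finType) (e : rel T) s v c :
  sdeg e s v = 0%R -> e v c -> internal e v.
Proof.
rewrite /sdeg => hz evc.
case hs: (s v c).
- have : 0 < #|[set u | e v u && ~~ s v u]|.
    have : 0 < #|[set u | e v u && s v u]| by apply/card_gt0P; exists c; rewrite inE evc hs.
    lia.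
  move/card_gt0P => [d]; rewrite inE => /andP[evd hd].
  exists c, d; split => //; apply/negP => /eqP cd; subst d; by rewrite hs in hd.
- have : 0 < #|[set u | e v u && s v u]|.
    have : 0 < #|[set u | e v u && ~~ s v u]| by apply/card_gt0P; exists c; rewrite inE evc hs.
    lia.
  move/card_gt0P => [d]; rewrite inE => /andP[evd hd].
  exists c, d; split => //; apply/negP => /eqP cd; subst d; by rewrite hs in hd.
Qed.

Unset Implicit Arguments.
Theorem mainTheorem3 (n : nat) (x : 'I_n -> int) :
  (1 <= n)%N ->
  injective x ->
  (forall i, (1 < x i)%R) ->
  diamD_is ([:: 1%R; 0%R] ++ [seq x i | i <- enum 'I_n])
           (if n == 1%N then 3 else 4).
Proof.
move=> hn xinj hx.
pose i0 : 'I_n := Ordinal hn.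
have memD : forall z, z \in [:: 1%R; 0%R] ++ [seq x i | i <- enum 'I_n] =
   [|| z == 1%R, z == 0%R | z \in [seq x i | i <- enum 'I_n]].
  by move=> z; rewrite /= !inE.
split.
- pose m i := (absz (x i)).+1.
  have [[[es ei] _ co ac] _] := v_signed m.
  exists (V m), (ve (m:=m)), (vs (m:=m)); split.
  + exact: v_signed.
  + move=> z; split.
    * rewrite memD => /orP[/eqP ->|/orP[/eqP ->|/mapP [i _ ->]]].
      -- by exists (cl m i0); exact: sdeg_cl.
      -- by exists None; exact: sdeg_c.
      -- exists (wv m i); rewrite sdeg_w /m; have := hx i; case: (x i) => // k _ /=; lia.
    * case => v <-; rewrite memD; case: v => [[i|[j|[i k]]]|].
      -- rewrite sdeg_w; apply/orP; right; apply/orP; right; apply/mapP; exists i.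
           by rewrite mem_enum.
         by rewrite /m; have := hx i; case: (x i) => // k _ /=; lia.
      -- by rewrite sdeg_cl.
      -- by have := sdeg_wl k; rewrite /wl => ->.
      -- by rewrite sdeg_c.
  + have k0 : 'I_(m i0) := Ordinal (ltn0Sn _).
    split.
    * case: (eqVneq n 1%N) => hn1.
         exists (cl m i0), (wl k0).
         have pp : path (ve (m:=m)) (cl m i0) [:: None; wv m i0; wl k0].
           by rewrite /= /ve /redge /= ?eqsimp.
         have up : uniq (cl m i0 :: [:: None; wv m i0; wl k0]).
           by rewrite /= ?inE ?eqsimp.
         exact: (dist_tree es ac pp up).
         have h1 : 1 < n by lia.
         pose i1 : 'I_n := Ordinal h1.
         have k1 : 'I_(m i1) := Ordinal (ltn0Sn _).
         exists (wl k0), (wl k1).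
         have pp : path (ve (m:=m)) (wl k0) [:: wv m i0; None; wv m i1; wl k1].
           by rewrite /= /ve /redge /= ?eqsimp.
         have up : uniq (wl k0 :: [:: wv m i0; None; wv m i1; wl k1]).
           by rewrite /= ?inE ?eqsimp.
         exact: (dist_tree es ac pp up).
    * move=> a b d hd.
      have w := walk_cat (@vwalk _ m a) (walk_rev es (@vwalk _ m b)).
      have hle := dist_le hd w.
      case: ifP => h1; last first.
        by apply: leq_trans hle _; have := vdepth_le a; have := vdepth_le b; lia.
      case: a hd hle w => [[i|[j|[i k]]]|] hd hle w; case: b hd hle w => [[i'|[j'|[i' k']]]|] hd hle w;
        try by apply: leq_trans hle _.
      have ii : i = i'.
        by apply: ord_inj; have := ltn_ord i; have := ltn_ord i'; have := eqP h1; lia.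
      subst i'.
      have e1 : ve (wl k) (wv m i) by rewrite /ve /redge /= ?eqsimp.
      have e2 : ve (wv m i) (wl k') by rewrite /ve /redge /= ?eqsimp ?orbT.
      exact: (leq_trans (dist_le hd (walk_cat (walk1 e1) (walk1 e2)))).
- move=> T e s d [[[es ei] _ co ac] _] real [_ hd].
  have [u hu] : exists u, sdeg e s u = 0%R by apply/real; rewrite memD eqxx orbT.
  have inD : forall i, x i \in [:: 1%R; 0%R] ++ [seq x i | i <- enum 'I_n].
    move=> i; rewrite memD; apply/orP; right; apply/orP; right.
    by apply/mapP; exists i; rewrite ?mem_enum.
  have [w0 hw0] : exists w, sdeg e s w = x i0 by apply/real.
  have iw0 := internal_pos hw0 (hx i0).
  have neq : forall a b i, sdeg e s a = 0%R -> sdeg e s b = x i -> a != b.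
    move=> a b i ha hb; apply/eqP => ab; subst b.
    by have := hx i; rewrite -hb ha.
  have uw0 := neq _ _ _ hu hw0.
  have iu : internal e u.
    have /connectP [p pp lp] := co u w0.
    case: p pp lp => [|c p] /=; first by move=> _ lp; rewrite lp eqxx in uw0.
    by move=> /andP[euc _] _; exact: internal_zero hu euc.
  case: ifP => h1.
  + exact: (lb3 es ei ac co uw0 iu iw0 hd).
  + have h2 : 1 < n by move/negbT: h1; lia.
    pose i1 : 'I_n := Ordinal h2.
    have [w1 hw1] : exists w, sdeg e s w = x i1 by apply/real.
    have iw1 := internal_pos hw1 (hx i1).
    have uw1 := neq _ _ _ hu hw1.
    have w01 : w0 != w1.
      apply/eqP => ww; subst w1; move: hw1; rewrite hw0 => /xinj.
      by move/(congr1 val).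
    exact: (lb4 es ei ac co uw0 w01 uw1 iu iw0 iw1 hd).
Qed.
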